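(* Let $\alpha\ge1$ and $\phi\in[0,2\pi_\alpha)\setminus\{\pi_\alpha/2,3\pi_\alpha/2\}$. The only solution $\zeta$ with $|\zeta|<\pi_\alpha$ of the equation $$\tan_\alpha(\zeta+\phi)-\tan_\alpha(\phi)=\zeta$$ is $\zeta=0$.
   Context: For real $a\ge1$: $\pi_a=2\int_0^1(1-t^{2a})^{-1/2}dt$; $\sin_a$ is the inverse of $s\mapsto\int_0^s(1-t^{2a})^{-1/2}dt$ on $[0,\pi_a/2]$, extended by $\sin_a(s)=\sin_a(\pi_a-s)$ to $[0,\pi_a]$, to an odd function on $[-\pi_a,\pi_a]$ and $2\pi_a$-periodically to $\mathbb{R}$; $\cos_a=\sin_a'$ and $\tan_a=\sin_a/\cos_a$ (defined where $\cos_a\neq0$). *)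

(* Defs.v *)
From Stdlib Require Import Reals Lra ClassicalEpsilon.
From Coquelicot Require Import Coquelicot.
Open Scope R_scope.

(* t ^ y for t >= 0 (with 0 ^ y = 0 for y > 0) *)
Definition rpow (t y : R) : R := if Rle_dec t 0 then 0 else Rpower t y.

Definition gtrig_f (a t : R) : R := / sqrt (1 - rpow t (2 * a)).

(* F_a(s) = int_0^s (1 - t^(2a))^(-1/2) dt for s in [0,1];
   the integral up to s = 1 is improper (limit s -> 1^-). *)
Definition gtrig_F (a s : R) : R :=
  if Rlt_dec s 1 then RInt (gtrig_f a) 0 s
  else RInt_gen (gtrig_f a) (at_point 0) (at_left 1).

Definition pi_a (a : R) : R := 2 * gtrig_F a 1.

(* sin_a on [0, pi_a/2]: the inverse of F_a : [0,1] -> [0, pi_a/2] *)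
Definition sin_a0 (a x : R) : R :=
  epsilon (inhabits 0) (fun s => 0 <= s <= 1 /\ gtrig_F a s = x).

(* sin_a on [0, pi_a], via sin_a(s) = sin_a(pi_a - s) *)
Definition sin_a1 (a x : R) : R :=
  if Rle_dec x (pi_a a / 2) then sin_a0 a x else sin_a0 a (pi_a a - x).

(* odd extension to [-pi_a, pi_a] *)
Definition sin_a2 (a x : R) : R :=
  if Rle_dec 0 x then sin_a1 a x else - sin_a1 a (- x).

(* 2 pi_a-periodic extension to R: reduce x into [-pi_a, pi_a) *)
Definition sin_a (a x : R) : R :=
  let p := pi_a a in
  sin_a2 a (x - 2 * p * IZR (Int_part ((x + p) / (2 * p)))).

Definition cos_a (a x : R) : R := Derive (sin_a a) x.

Definition tan_a (a x : R) : R := sin_a a x / cos_a a x.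

(* Main.v *)
Require Import Defs.
From Stdlib Require Import Reals Lra Lia ZArith ClassicalEpsilon.
From Coquelicot Require Import Coquelicot.
Open Scope R_scope.

Lemma rpow_nonneg t b : 0 <= rpow t b.
Proof. unfold rpow; destruct (Rle_dec t 0). lra. unfold Rpower; left; apply exp_pos. Qed.

Lemma rpow_pos t b : 0 < t -> 0 < rpow t b.
Proof. intro; unfold rpow; destruct (Rle_dec t 0). lra. unfold Rpower; apply exp_pos. Qed.

Lemma rpow_le_id t b : 1 <= b -> 0 <= t <= 1 -> rpow t b <= t.
Proof.
  intros hb ht; unfold rpow; destruct (Rle_dec t 0) as [h|h]. lra.
  replace b with (1 + (b - 1)) by ring. rewrite Rpower_plus, Rpower_1 by lra.
  assert (Rpower t (b-1) <= 1).
  { destruct (Req_dec t 1) as [->|]. unfold Rpower; rewrite ln_1, Rmult_0_r, exp_0; lra.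
    replace 1 with (Rpower 1 (b-1)) at 2 by (unfold Rpower; rewrite ln_1, Rmult_0_r, exp_0; lra).
    apply Rle_Rpower_l; lra. }
  assert (0 < Rpower t (b-1)) by (unfold Rpower; apply exp_pos). nra.
Qed.

Lemma rpow_lt t1 t2 b : 0 < b -> 0 <= t1 < t2 -> rpow t1 b < rpow t2 b.
Proof.
  intros hb ht; unfold rpow; destruct (Rle_dec t1 0); destruct (Rle_dec t2 0); try lra.
  unfold Rpower; apply exp_pos. apply Rlt_Rpower_l; lra.
Qed.

Lemma rpow_1 b : rpow 1 b = 1.
Proof. unfold rpow; destruct (Rle_dec 1 0). lra. unfold Rpower; rewrite ln_1, Rmult_0_r, exp_0; lra. Qed.

Lemma rpow_abs_cont t b : 1 <= b -> continuous (fun x => rpow (Rabs x) b) t.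
Proof.
  intros hb. destruct (Req_dec t 0) as [->|ht].
  - apply continuity_pt_filterlim. intros eps heps.
    exists (Rmin 1 eps); split. apply Rmin_glb_lt; lra.
    intros x [_ hx]. unfold dist; simpl; unfold R_dist. rewrite Rabs_R0.
    unfold rpow at 2; destruct (Rle_dec 0 0); [|lra].
    simpl in hx; unfold R_dist in hx. rewrite Rminus_0_r in hx |- *.
    assert (Rabs x < 1) by (apply Rlt_le_trans with (1 := hx); apply Rmin_l).
    assert (Rabs x < eps) by (apply Rlt_le_trans with (1 := hx); apply Rmin_r).
    pose proof (rpow_nonneg (Rabs x) b). pose proof (Rabs_pos x).
    pose proof (rpow_le_id (Rabs x) b hb ltac:(lra)).
    rewrite Rabs_right by lra. lra.
  - apply continuous_ext_loc with (g := fun x => exp (b * ln (Rabs x))).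
    + assert (0 < Rabs t) by (apply Rabs_pos_lt; auto).
      exists (mkposreal _ H). intros y hy. simpl in hy. unfold ball in hy; simpl in hy; unfold AbsRing_ball in hy; simpl in hy.
      unfold abs, minus, plus, opp in hy; simpl in hy.
      unfold rpow. destruct (Rle_dec (Rabs y) 0) as [h|h]; [|reflexivity].
      exfalso. assert (Rabs y = 0) by (pose proof (Rabs_pos y); lra).
      apply Rabs_eq_0 in H0. subst y. rewrite Rplus_0_l, Rabs_Ropp in hy. lra.
    + apply continuity_pt_filterlim.
      apply (continuity_pt_comp (fun x => b * ln (Rabs x)) exp).
      * apply continuity_pt_mult. apply continuity_pt_const; intros ??; auto.
        apply (continuity_pt_comp Rabs ln). apply Rcontinuity_abs.
        apply derivable_continuous_pt. exists (/ Rabs t). apply derivable_pt_lim_ln. apply Rabs_pos_lt; auto.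
      * apply derivable_continuous_pt. exists (exp (b * ln (Rabs t))). apply derivable_pt_lim_exp.
Qed.

Definition fe (a t : R) : R := gtrig_f a (Rabs t).
Definition Fe (a s : R) : R := RInt (fe a) 0 s.

Lemma fe_eq a t : fe a t = / sqrt (1 - rpow (Rabs t) (2*a)).
Proof. reflexivity. Qed.

Lemma rp_abs_lt1 a t : 1 <= a -> Rabs t < 1 -> 0 <= rpow (Rabs t) (2*a) < 1.
Proof.
  intros ha ht. split. apply rpow_nonneg.
  pose proof (rpow_le_id (Rabs t) (2*a) ltac:(lra) ltac:(split;[apply Rabs_pos|lra])). lra.
Qed.

Lemma fe_ge1 a t : 1 <= a -> Rabs t < 1 -> 1 <= fe a t.
Proof.
  intros ha ht. rewrite fe_eq. pose proof (rp_abs_lt1 a t ha ht).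
  assert (0 < sqrt (1 - rpow (Rabs t) (2 * a)) <= 1).
  { split. apply sqrt_lt_R0; lra. assert (sqrt (1 - rpow (Rabs t) (2 * a)) <= sqrt 1) by (apply sqrt_le_1_alt; lra). rewrite sqrt_1 in H0. exact H0. }
  replace 1 with (/1) at 1 by apply Rinv_1. apply Rinv_le_contravar; lra.
Qed.

Lemma fe_pos a t : 1 <= a -> Rabs t < 1 -> 0 < fe a t.
Proof. intros; pose proof (fe_ge1 a t H H0); lra. Qed.

Lemma fe_mono a t1 t2 : 1 <= a -> Rabs t1 < Rabs t2 -> Rabs t2 < 1 -> fe a t1 < fe a t2.
Proof.
  intros ha h1 h2. rewrite !fe_eq.
  pose proof (rp_abs_lt1 a t2 ha h2).
  pose proof (Rabs_pos t1).
  pose proof (rpow_lt (Rabs t1) (Rabs t2) (2*a) ltac:(lra) ltac:(lra)).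
  apply Rinv_lt_contravar. apply Rmult_lt_0_compat; apply sqrt_lt_R0; try lra. 
  apply sqrt_lt_1_alt; lra.
Qed.

Lemma fe_even a t : fe a (- t) = fe a t.
Proof. unfold fe; rewrite Rabs_Ropp; reflexivity. Qed.

Lemma fe_cont a t : 1 <= a -> Rabs t < 1 -> continuous (fe a) t.
Proof.
  intros ha ht. unfold fe, gtrig_f.
  apply continuous_Rinv_comp.
  - apply (continuous_comp (fun x => 1 - rpow (Rabs x) (2*a)) sqrt).
    apply (continuous_minus (fun _ => 1)). apply continuous_const. apply rpow_abs_cont; lra.
    apply continuous_sqrt.
  - pose proof (rp_abs_lt1 a t ha ht). apply Rgt_not_eq. apply sqrt_lt_R0; lra.
Qed.

Lemma fe_le a t : 1 <= a -> 0 <= t < 1 -> fe a t <= / sqrt (1 - t).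
Proof.
  intros ha ht. rewrite fe_eq. rewrite Rabs_right by lra.
  pose proof (rpow_le_id t (2*a) ltac:(lra) ltac:(lra)).
  pose proof (rpow_nonneg t (2*a)).
  apply Rinv_le_contravar. apply sqrt_lt_R0; lra. apply sqrt_le_1_alt; lra.
Qed.

Lemma fe_exRInt a x y : 1 <= a -> Rabs x < 1 -> Rabs y < 1 -> ex_RInt (fe a) x y.
Proof.
  intros ha hx hy. apply (ex_RInt_continuous (V:=R_CompleteNormedModule)). intros z hz. apply fe_cont; auto.
  apply Rabs_def1.
  - apply Rle_lt_trans with (Rmax x y). lra. unfold Rmax; destruct (Rle_dec x y); apply Rabs_def2 in hx; apply Rabs_def2 in hy; lra.
  - apply Rlt_le_trans with (Rmin x y). unfold Rmin; destruct (Rle_dec x y); apply Rabs_def2 in hx; apply Rabs_def2 in hy; lra. lra.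
Qed.

Lemma Fe_diff a s1 s2 : 1 <= a -> Rabs s1 < 1 -> Rabs s2 < 1 -> Fe a s2 - Fe a s1 = RInt (fe a) s1 s2.
Proof.
  intros ha h1 h2. unfold Fe.
  assert (Rabs 0 < 1) by (rewrite Rabs_R0; lra).
  rewrite <- (RInt_Chasles (fe a) 0 s1 s2) by (apply fe_exRInt; auto).
  unfold plus; simpl. ring.
Qed.

Lemma Fe_lb a s1 s2 : 1 <= a -> Rabs s1 < 1 -> Rabs s2 < 1 -> s1 <= s2 -> s2 - s1 <= Fe a s2 - Fe a s1.
Proof.
  intros ha h1 h2 h. rewrite Fe_diff by auto.
  replace (s2 - s1) with (RInt (fun _ => 1) s1 s2).
  apply RInt_le; auto. apply ex_RInt_const. apply fe_exRInt; auto.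
  intros x hx. apply fe_ge1; auto. apply Rabs_def1; apply Rabs_def2 in h1; apply Rabs_def2 in h2; lra.
  rewrite RInt_const. unfold scal; simpl; unfold mult; simpl. ring.
Qed.

Lemma Fe_derive a s : 1 <= a -> Rabs s < 1 -> is_derive (Fe a) s (fe a s).
Proof.
  intros ha hs. apply (is_derive_RInt (V:=R_CompleteNormedModule) (fe a) (Fe a) 0 s).
  - assert (0 < 1 - Rabs s) by lra. exists (mkposreal _ H). intros y hy.
    apply RInt_correct. apply fe_exRInt; auto. rewrite Rabs_R0; lra.
    unfold ball in hy; simpl in hy; unfold AbsRing_ball, abs, minus, plus, opp in hy; simpl in hy.
    revert hy; generalize (y : R); clear y; intros y hy. pose proof (Rabs_triang_inv y s). unfold Rminus in H0. lra.
  - apply fe_cont; auto.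
Qed.

Lemma Fe_odd a s : 1 <= a -> Rabs s < 1 -> Fe a (- s) = - Fe a s.
Proof.
  intros ha hs. unfold Fe.
  assert (H := RInt_comp_lin (fe a) (-1) 0 0 s).
  replace (-1 * 0 + 0) with 0 in H by ring. replace (-1 * s + 0) with (-s) in H by ring.
  rewrite <- H. 2:{ apply fe_exRInt; auto. rewrite Rabs_R0; lra. rewrite Rabs_Ropp; auto. }
  replace (- RInt (fe a) 0 s) with (RInt (fun x => opp (fe a x)) 0 s).
  2:{ apply (RInt_opp (V:=R_CompleteNormedModule)). apply fe_exRInt; auto. rewrite Rabs_R0; lra. }
  apply RInt_ext. intros x _. unfold scal, opp; simpl; unfold mult; simpl.
  replace (-1 * x + 0) with (- x) by ring. rewrite fe_even. ring.
Qed.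

Lemma Fe_0 a : Fe a 0 = 0.
Proof. unfold Fe. rewrite RInt_point. reflexivity. Qed.

Lemma Fe_ub a s : 1 <= a -> 0 <= s < 1 -> Fe a s <= 2.
Proof.
  intros ha hs. unfold Fe.
  assert (HI : is_RInt (fun t => / sqrt (1 - t)) 0 s (minus ((fun t => -2 * sqrt (1 - t)) s) ((fun t => -2 * sqrt (1 - t)) 0))).
  { apply (is_RInt_derive (V:=R_CompleteNormedModule) (fun t => -2 * sqrt (1 - t)) (fun t => / sqrt (1 - t)) 0 s).
    - intros x hx. rewrite Rmin_left in hx by lra. rewrite Rmax_right in hx by lra.
      auto_derive. lra. unfold Rminus. field. apply Rgt_not_eq. apply sqrt_lt_R0. lra.
    - intros x hx. rewrite Rmin_left in hx by lra. rewrite Rmax_right in hx by lra.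
      apply continuous_Rinv_comp.
      apply (continuous_comp (fun t => 1 - t) sqrt). apply (continuous_minus (fun _ => 1)). apply continuous_const. apply continuous_id. apply continuous_sqrt.
      apply Rgt_not_eq. apply sqrt_lt_R0. lra. }
  apply Rle_trans with (RInt (fun t => / sqrt (1 - t)) 0 s).
  - apply RInt_le. lra. apply fe_exRInt; auto. rewrite Rabs_R0; lra. rewrite Rabs_right; lra.
    eexists; exact HI. intros x hx. apply fe_le; auto. lra.
  - rewrite (is_RInt_unique _ _ _ _ HI). unfold minus, plus, opp; simpl.
    replace (1 - 0) with 1 by ring. rewrite sqrt_1. pose proof (sqrt_pos (1 - s)). lra.
Qed.

Definition Lg (a : R) : R := gtrig_F a 1.

Lemma gtrig_F_lt a s : s < 1 -> gtrig_F a s = RInt (gtrig_f a) 0 s.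
Proof. intros; unfold gtrig_F; destruct (Rlt_dec s 1); [reflexivity|lra]. Qed.

Lemma gtrig_F_ge a s : 1 <= s -> gtrig_F a s = Lg a.
Proof. intros; unfold Lg, gtrig_F; destruct (Rlt_dec s 1); destruct (Rlt_dec 1 1); lra || reflexivity. Qed.

Lemma gtrig_F_Fe a s : 0 <= s < 1 -> gtrig_F a s = Fe a s.
Proof.
  intros hs. rewrite gtrig_F_lt by lra. unfold Fe. apply RInt_ext.
  intros x hx. rewrite Rmin_left in hx by lra. unfold fe. rewrite Rabs_right by lra. reflexivity.
Qed.

Lemma Fe_mono a s1 s2 : 1 <= a -> Rabs s1 < 1 -> Rabs s2 < 1 -> s1 < s2 -> Fe a s1 < Fe a s2.
Proof. intros. pose proof (Fe_lb a s1 s2 H H0 H1 ltac:(lra)). lra. Qed.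

Lemma Lg_prop a : 1 <= a ->
  (forall s, 0 <= s < 1 -> Fe a s <= Lg a) /\
  (forall eps, 0 < eps -> exists s, 0 <= s < 1 /\ Lg a - eps < Fe a s).
Proof.
  intros ha.
  set (E := fun v => exists s, 0 <= s < 1 /\ v = Fe a s).
  assert (HB : bound E). { exists 2. intros v [s [hs ->]]. apply Fe_ub; auto. }
  assert (HE : exists x, E x). { exists (Fe a 0). exists 0. split; [lra|reflexivity]. }
  destruct (completeness E HB HE) as [L [HL1 HL2]].
  assert (Hup : forall s, 0 <= s < 1 -> Fe a s <= L).
  { intros s hs. apply HL1. exists s. auto. }
  assert (Happ : forall eps, 0 < eps -> exists s, 0 <= s < 1 /\ L - eps < Fe a s).
  { intros eps heps. apply NNPP. intro hn.
    assert (is_upper_bound E (L - eps)).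
    { intros v [s [hs ->]]. apply Rnot_lt_le. intro h. apply hn. exists s; auto. }
    apply HL2 in H. lra. }
  assert (HI : is_RInt_gen (gtrig_f a) (at_point 0) (at_left 1) L).
  { intros P [eps HP].
    destruct (Happ eps (cond_pos eps)) as [s0 [hs0 hFs0]].
    apply (Filter_prod _ _ _ (fun x => x = 0) (fun y => s0 < y < 1)).
    - reflexivity.
    - assert (0 < 1 - s0) by lra. exists (mkposreal _ H). intros y hy hy1. simpl.
      unfold ball in hy; simpl in hy; unfold AbsRing_ball, abs, minus, plus, opp in hy; simpl in hy.
      revert hy hy1; generalize (y : R); clear y; intros y hy hy1.
      apply Rabs_def2 in hy. lra.
    - intros x y -> [hy1 hy2]. exists (Fe a y). split.
      + simpl. unfold Fe. apply (is_RInt_ext (V:=R_NormedModule) (fe a)).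
        intros t ht. rewrite Rmin_left in ht by lra. unfold fe. rewrite Rabs_right by lra. reflexivity.
        apply (RInt_correct (V:=R_CompleteNormedModule)). apply fe_exRInt; auto. rewrite Rabs_R0; lra. rewrite Rabs_right; lra.
      + apply HP. unfold ball; simpl; unfold AbsRing_ball, abs, minus, plus, opp; simpl.
        assert (Fe a s0 <= Fe a y). { left; apply Fe_mono; auto; try rewrite Rabs_right; lra. }
        assert (Fe a y <= L) by (apply Hup; lra).
        apply Rabs_def1; lra. }
  assert (HL : Lg a = L).
  { unfold Lg, gtrig_F. destruct (Rlt_dec 1 1). lra.
    apply (is_RInt_gen_unique (V:=R_CompleteNormedModule)); auto. }
  rewrite HL. auto.
Qed.

Lemma Fe_lt_Lg a s : 1 <= a -> 0 <= s < 1 -> Fe a s < Lg a.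
Proof.
  intros ha hs. destruct (Lg_prop a ha) as [H _].
  apply Rlt_le_trans with (Fe a ((s+1)/2)). apply Fe_mono; auto; try rewrite Rabs_right; lra.
  apply H; lra.
Qed.

Lemma Lg_pos a : 1 <= a -> 0 < Lg a.
Proof.
  intros ha. pose proof (Fe_lt_Lg a 0 ha ltac:(lra)). rewrite Fe_0 in H. exact H.
Qed.

Lemma pi_a_eq a : pi_a a = 2 * Lg a.
Proof. reflexivity. Qed.

Lemma Fe_cont a s : 1 <= a -> Rabs s < 1 -> continuity_pt (Fe a) s.
Proof.
  intros ha hs. apply continuity_pt_filterlim.
  apply (ex_derive_continuous (K:=R_AbsRing) (V:=R_NormedModule)).
  eexists. apply Fe_derive; auto.
Qed.

Lemma Fe_surj a y : 1 <= a -> 0 <= y < Lg a -> exists s, 0 <= s < 1 /\ Fe a s = y.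
Proof.
  intros ha hy. destruct (Req_dec y 0) as [->|hy0].
  { exists 0. split. lra. apply Fe_0. }
  destruct (Lg_prop a ha) as [_ H]. destruct (H (Lg a - y) ltac:(lra)) as [s1 [hs1 hF1]].
  assert (0 < s1). { destruct (Req_dec s1 0) as [->|]; [|lra]. rewrite Fe_0 in hF1. lra. }
  destruct (Ranalysis5.IVT_interv (fun s => Fe a s - y) 0 s1) as [z [hz1 hz2]].
  - intros x hx. apply continuity_pt_minus. apply Fe_cont; auto. rewrite Rabs_right; lra.
    apply continuity_pt_const. intros ??; reflexivity.
  - lra.
  - simpl. rewrite Fe_0. lra.
  - simpl. lra.
  - exists z. split. lra. simpl in hz2. lra.
Qed.

Lemma sin_a0_spec a y : 1 <= a -> 0 <= y < Lg a -> 0 <= sin_a0 a y < 1 /\ Fe a (sin_a0 a y) = y.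
Proof.
  intros ha hy. unfold sin_a0.
  match goal with |- context [epsilon ?i ?P] =>
    assert (HP : P (epsilon i P)); [apply epsilon_spec|]; set (s := epsilon i P) in * end.
  - destruct (Fe_surj a y ha hy) as [s0 [hs hF]]. exists s0. split. lra. rewrite gtrig_F_Fe; auto.
  - destruct HP as [hs hF]. destruct (Req_dec s 1) as [->|hs1].
    + rewrite gtrig_F_ge in hF by lra. lra.
    + rewrite gtrig_F_Fe in hF by lra. split. lra. auto.
Qed.

Lemma sin_a0_L a : 1 <= a -> sin_a0 a (Lg a) = 1.
Proof.
  intros ha. unfold sin_a0.
  match goal with |- context [epsilon ?i ?P] =>
    assert (HP : P (epsilon i P)); [apply epsilon_spec|]; set (s := epsilon i P) in * end.
  - exists 1. split. lra. apply gtrig_F_ge; lra.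
  - destruct HP as [hs hF]. destruct (Req_dec s 1) as [->|hs1]. reflexivity.
    rewrite gtrig_F_Fe in hF by lra. pose proof (Fe_lt_Lg a s ha ltac:(lra)). lra.
Qed.

Lemma sin_a0_range a y : 1 <= a -> 0 <= y <= Lg a -> 0 <= sin_a0 a y <= 1.
Proof.
  intros ha hy. destruct (Req_dec y (Lg a)) as [->|]. rewrite sin_a0_L; lra.
  pose proof (sin_a0_spec a y ha ltac:(lra)). lra.
Qed.

Lemma sin_a_red a x n : 1 <= a ->
  2 * pi_a a * IZR n - pi_a a <= x < 2 * pi_a a * IZR n + pi_a a ->
  sin_a a x = sin_a2 a (x - 2 * pi_a a * IZR n).
Proof.
  intros ha hx. pose proof (Lg_pos a ha) as hL. rewrite pi_a_eq in *.
  unfold sin_a. rewrite pi_a_eq. f_equal. f_equal. f_equal. f_equal.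
  symmetry. apply Int_part_spec.
  set (q := (x + 2 * Lg a) / (2 * (2 * Lg a))).
  assert (Hq : q * (4 * Lg a) = x + 2 * Lg a) by (unfold q; field; lra).
  split; nra.
Qed.

Lemma sin_a_n a x : 1 <= a -> exists n,
  2 * pi_a a * IZR n - pi_a a <= x < 2 * pi_a a * IZR n + pi_a a.
Proof.
  intros ha. pose proof (Lg_pos a ha) as hL. rewrite pi_a_eq.
  exists (Int_part ((x + 2 * Lg a) / (2 * (2 * Lg a)))).
  pose proof (base_Int_part ((x + 2 * Lg a) / (2 * (2 * Lg a)))) as [h1 h2].
  set (n := Int_part _) in *. set (q := (x + 2 * Lg a) / (2 * (2 * Lg a))) in *.
  assert (Hq : q * (4 * Lg a) = x + 2 * Lg a) by (unfold q; field; lra).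
  split; nra.
Qed.

Lemma half_pi a : pi_a a / 2 = Lg a.
Proof. rewrite pi_a_eq; field. Qed.

Lemma sin_a1_sym a t : 1 <= a -> 0 <= t <= pi_a a -> sin_a1 a (pi_a a - t) = sin_a1 a t.
Proof.
  intros ha ht. unfold sin_a1. rewrite half_pi in *. rewrite pi_a_eq in *.
  destruct (Rle_dec (2 * Lg a - t) (Lg a)); destruct (Rle_dec t (Lg a)).
  - assert (t = Lg a) by lra. subst. replace (2 * Lg a - Lg a) with (Lg a) by ring. reflexivity.
  - reflexivity.
  - replace (2 * Lg a - (2 * Lg a - t)) with t by ring. reflexivity.
  - lra.
Qed.

Lemma sin_a_shift a x : 1 <= a -> sin_a a (x + pi_a a) = - sin_a a x.
Proof.
  intros ha. pose proof (Lg_pos a ha) as hL.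
  destruct (sin_a_n a x ha) as [n hn].
  rewrite (sin_a_red a x n ha hn).
  set (x' := x - 2 * pi_a a * IZR n).
  destruct (Rle_dec 0 x') as [h0|h0].
  - rewrite (sin_a_red a (x + pi_a a) (n + 1)) by (try rewrite plus_IZR; unfold x' in *; rewrite pi_a_eq in *; lra).
    rewrite plus_IZR.
    replace (x + pi_a a - 2 * pi_a a * (IZR n + 1)) with (x' - pi_a a) by (unfold x'; ring).
    unfold sin_a2. destruct (Rle_dec 0 (x' - pi_a a)). unfold x' in *; rewrite pi_a_eq in *; lra.
    destruct (Rle_dec 0 x'); [|lra].
    replace (- (x' - pi_a a)) with (pi_a a - x') by ring.
    rewrite sin_a1_sym; auto. unfold x' in *; rewrite pi_a_eq in *; lra.
  - rewrite (sin_a_red a (x + pi_a a) n) by (unfold x' in *; rewrite pi_a_eq in *; lra).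
    replace (x + pi_a a - 2 * pi_a a * IZR n) with (pi_a a - (- x')) by (unfold x'; ring).
    unfold sin_a2. destruct (Rle_dec 0 x'); [lra|].
    destruct (Rle_dec 0 (pi_a a - - x')). 2:{ unfold x' in *; rewrite pi_a_eq in *; lra. }
    rewrite sin_a1_sym. ring. auto. unfold x' in *; rewrite pi_a_eq in *; lra.
Qed.

Lemma sin_a_shiftm a x : 1 <= a -> sin_a a (x - pi_a a) = - sin_a a x.
Proof.
  intros ha. pose proof (sin_a_shift a (x - pi_a a) ha).
  replace (x - pi_a a + pi_a a) with x in H by ring. lra.
Qed.

Lemma sin_a_shift_nat a n x : 1 <= a -> sin_a a (x + INR n * pi_a a) = (-1)^n * sin_a a x
  /\ sin_a a (x - INR n * pi_a a) = (-1)^n * sin_a a x.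
Proof.
  intros ha. induction n.
  - simpl. replace (x + 0 * pi_a a) with x by ring. replace (x - 0 * pi_a a) with x by ring. split; ring.
  - destruct IHn as [I1 I2]. rewrite S_INR. split.
    + replace (x + (INR n + 1) * pi_a a) with (x + INR n * pi_a a + pi_a a) by ring.
      rewrite sin_a_shift, I1 by auto. simpl. ring.
    + replace (x - (INR n + 1) * pi_a a) with (x - INR n * pi_a a - pi_a a) by ring.
      rewrite sin_a_shiftm, I2 by auto. simpl. ring.
Qed.

Lemma pow_m1 n : (-1)^n = 1 \/ (-1)^n = -1.
Proof. induction n; simpl. auto. destruct IHn as [-> | ->]; [right|left]; ring. Qed.

Lemma sin_a_shiftZ a k : 1 <= a -> exists sg, (sg = 1 \/ sg = -1) /\
  forall x, sin_a a (x + IZR k * pi_a a) = sg * sin_a a x.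
Proof.
  intros ha. destruct (Z_le_gt_dec 0 k) as [hk|hk].
  - exists ((-1)^(Z.to_nat k)). split. apply pow_m1.
    intros x. replace (IZR k) with (INR (Z.to_nat k)). apply sin_a_shift_nat; auto.
    rewrite INR_IZR_INZ. f_equal. apply Z2Nat.id. auto.
  - exists ((-1)^(Z.to_nat (- k))). split. apply pow_m1.
    intros x. replace (x + IZR k * pi_a a) with (x - INR (Z.to_nat (-k)) * pi_a a). apply sin_a_shift_nat; auto.
    rewrite INR_IZR_INZ. rewrite Z2Nat.id by lia. rewrite opp_IZR. ring.
Qed.

Lemma sin_a_is2 a y : 1 <= a -> - (2 * Lg a) <= y < 2 * Lg a -> sin_a a y = sin_a2 a y.
Proof.
  intros ha hy. rewrite <- pi_a_eq in hy. rewrite (sin_a_red a y 0 ha) by (simpl; lra). f_equal. simpl. ring.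
Qed.

Lemma sin_a_small a y : 1 <= a -> - Lg a < y < Lg a ->
  -1 < sin_a a y < 1 /\ Fe a (sin_a a y) = y.
Proof.
  intros ha hy. pose proof (Lg_pos a ha).
  rewrite sin_a_is2 by lra.
  unfold sin_a2, sin_a1. rewrite half_pi.
  destruct (Rle_dec 0 y).
  - destruct (Rle_dec y (Lg a)); [|lra].
    pose proof (sin_a0_spec a y ha ltac:(lra)). split. lra. tauto.
  - destruct (Rle_dec (- y) (Lg a)); [|lra].
    pose proof (sin_a0_spec a (-y) ha ltac:(lra)) as [h1 h2]. split. lra.
    rewrite Fe_odd by (auto; rewrite Rabs_right; lra). lra.
Qed.

Lemma Fe_inj a s1 s2 : 1 <= a -> Rabs s1 < 1 -> Rabs s2 < 1 -> Fe a s1 = Fe a s2 -> s1 = s2.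
Proof.
  intros ha h1 h2 he. destruct (Rtotal_order s1 s2) as [h|[h|h]]; auto.
  pose proof (Fe_mono a s1 s2 ha h1 h2 h); lra.
  pose proof (Fe_mono a s2 s1 ha h2 h1 h); lra.
Qed.

Lemma Fe_range a s : 1 <= a -> Rabs s < 1 -> - Lg a < Fe a s < Lg a.
Proof.
  intros ha hs. destruct (Rle_dec 0 s).
  - pose proof (Fe_lt_Lg a s ha ltac:(apply Rabs_def2 in hs; lra)).
    pose proof (Fe_lb a 0 s ha ltac:(rewrite Rabs_R0; lra) hs r). rewrite Fe_0 in H0. lra.
  - pose proof (Fe_lt_Lg a (-s) ha ltac:(apply Rabs_def2 in hs; lra)).
    rewrite Fe_odd in H by auto.
    pose proof (Fe_lb a s 0 ha hs ltac:(rewrite Rabs_R0; lra) ltac:(lra)). rewrite Fe_0 in H0. lra.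
Qed.

Lemma sin_a_Fe a s : 1 <= a -> Rabs s < 1 -> sin_a a (Fe a s) = s.
Proof.
  intros ha hs. pose proof (Fe_range a s ha hs).
  destruct (sin_a_small a (Fe a s) ha H) as [h1 h2].
  apply (Fe_inj a); auto. apply Rabs_def1; lra.
Qed.

Lemma sin_a_mono a y1 y2 : 1 <= a -> - Lg a < y1 -> y1 < y2 -> y2 < Lg a -> sin_a a y1 < sin_a a y2.
Proof.
  intros ha h1 h h2.
  destruct (sin_a_small a y1 ha ltac:(lra)) as [a1 b1].
  destruct (sin_a_small a y2 ha ltac:(lra)) as [a2 b2].
  apply Rnot_le_lt. intro hle.
  destruct hle as [hlt|heq].
  - pose proof (Fe_mono a (sin_a a y2) (sin_a a y1) ha ltac:(apply Rabs_def1; lra) ltac:(apply Rabs_def1; lra) hlt). lra.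
  - rewrite heq in b2. lra.
Qed.

Lemma sin_a_lip a y1 y2 : 1 <= a -> - Lg a < y1 < Lg a -> - Lg a < y2 < Lg a ->
  Rabs (sin_a a y1 - sin_a a y2) <= Rabs (y1 - y2).
Proof.
  intros ha h1 h2.
  destruct (sin_a_small a y1 ha h1) as [a1 b1].
  destruct (sin_a_small a y2 ha h2) as [a2 b2].
  destruct (Rle_dec (sin_a a y1) (sin_a a y2)).
  - pose proof (Fe_lb a (sin_a a y1) (sin_a a y2) ha ltac:(apply Rabs_def1; lra) ltac:(apply Rabs_def1; lra) r).
    rewrite b1, b2 in H. rewrite Rabs_left1 by lra. rewrite Rabs_left1 by lra. lra.
  - pose proof (Fe_lb a (sin_a a y2) (sin_a a y1) ha ltac:(apply Rabs_def1; lra) ltac:(apply Rabs_def1; lra) ltac:(lra)).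
    rewrite b1, b2 in H. rewrite Rabs_right by lra. rewrite Rabs_right by lra. lra.
Qed.

Lemma sin_a_peak a h : 1 <= a -> Rabs h < Lg a -> sin_a a (Lg a + h) = sin_a0 a (Lg a - Rabs h).
Proof.
  intros ha hh. pose proof (Lg_pos a ha). apply Rabs_def2 in hh as hh'.
  rewrite sin_a_is2 by lra.
  unfold sin_a2, sin_a1. rewrite half_pi.
  destruct (Rle_dec 0 (Lg a + h)); [|lra].
  destruct (Rle_dec (Lg a + h) (Lg a)).
  - rewrite Rabs_left1 by lra. f_equal; ring.
  - rewrite Rabs_right by lra. rewrite pi_a_eq. f_equal; ring.
Qed.

Lemma sin_a_cont a y : 1 <= a -> - Lg a < y < Lg a -> continuity_pt (sin_a a) y.
Proof.
  intros ha hy. unfold continuity_pt, continue_in, limit1_in, limit_in.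
  intros eps heps. assert (hd : 0 < Rmin eps (Lg a - Rabs y)).
  { apply Rmin_glb_lt. lra. destruct (Rle_dec 0 y). rewrite Rabs_right; lra. rewrite Rabs_left; lra. }
  exists (Rmin eps (Lg a - Rabs y)). split. auto.
  intros z [_ hz]. simpl in *. unfold R_dist in *.
  assert (Rabs (z - y) < eps) by (eapply Rlt_le_trans; [exact hz|apply Rmin_l]).
  assert (Rabs (z - y) < Lg a - Rabs y) by (eapply Rlt_le_trans; [exact hz|apply Rmin_r]).
  assert (- Lg a < z < Lg a).
  { pose proof (Rabs_triang (z - y) y). replace (z - y + y) with z in H1 by ring.
    assert (Rabs z < Lg a) by lra. apply Rabs_def2 in H2. lra. }
  eapply Rle_lt_trans. apply sin_a_lip; auto. auto.
Qed.

Lemma sin_a_derive a y : 1 <= a -> - Lg a < y < Lg a ->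
  is_derive (sin_a a) y (/ fe a (sin_a a y)).
Proof.
  intros ha hy. apply is_derive_Reals.
  assert (hd : 0 < Lg a - Rabs y).
  { destruct (Rle_dec 0 y). rewrite Rabs_right; lra. rewrite Rabs_left; lra. }
  set (d := (Lg a - Rabs y) / 2). assert (hd0 : 0 < d) by (unfold d; lra).
  assert (hyd : - Lg a < y - d /\ y + d < Lg a).
  { unfold d. destruct (Rle_dec 0 y). rewrite Rabs_right in *; lra. rewrite Rabs_left in *; lra. }
  destruct (sin_a_small a (y - d) ha ltac:(lra)) as [hl _].
  destruct (sin_a_small a (y + d) ha ltac:(lra)) as [hu _].
  assert (Prf : forall z, sin_a a (y - d) <= z <= sin_a a (y + d) -> derivable_pt (Fe a) z).
  { intros z hz. exists (fe a z). apply is_derive_Reals. apply Fe_derive; auto. apply Rabs_def1; lra. }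
  assert (Prg_incr : sin_a a (y - d) <= sin_a a y <= sin_a a (y + d)).
  { split; left; apply sin_a_mono; auto; lra. }
  assert (hfe : derive_pt (Fe a) (sin_a a y) (Prf (sin_a a y) Prg_incr) = fe a (sin_a a y)).
  { apply derive_pt_eq_0. apply is_derive_Reals. apply Fe_derive; auto.
    destruct (sin_a_small a y ha hy). apply Rabs_def1; lra. }
  destruct (sin_a_small a y ha hy) as [hs1 _].
  assert (hpos : 0 < fe a (sin_a a y)) by (apply fe_pos; auto; apply Rabs_def1; lra).
  pose proof (Ranalysis5.derivable_pt_lim_recip_interv (Fe a) (sin_a a) (y - d) (y + d) y Prf
     (sin_a_cont a y ha hy) ltac:(unfold d; lra) ltac:(unfold d; lra) Prg_incr) as H.
  rewrite hfe in H. replace (/ fe a (sin_a a y)) with (1 / fe a (sin_a a y)) by (field; lra).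
  apply H.
  - intros z hz. unfold comp, id. apply sin_a_small; auto. lra.
  - lra.
Qed.

Lemma bern a s : 1 <= a -> 1/2 <= s <= 1 -> 1 - rpow s (2*a) <= 4 * a * (1 - s).
Proof.
  intros ha hs. unfold rpow. destruct (Rle_dec s 0). lra.
  unfold Rpower.
  pose proof (exp_ineq1_le (2 * a * ln s)).
  pose proof (exp_ineq1_le (- ln s)). rewrite exp_Ropp, exp_ln in H0 by lra.
  assert (ln s <= 0). { destruct (Req_dec s 1) as [->|]. rewrite ln_1; lra. left. rewrite <- ln_1. apply ln_increasing; lra. }
  assert (- ln s <= / s - 1) by lra.
  assert (/ s - 1 <= 2 * (1 - s)).
  { assert (/ s * s = 1) by (field; lra). assert (/ s <= 2). { replace 2 with (/ (1/2)) by field. apply Rinv_le_contravar; lra. } nra. }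
  nra.
Qed.

Lemma peak_bound a : 1 <= a -> exists d, 0 < d /\ forall u, 0 < u < d ->
  1 - 4 * a * u^2 <= sin_a0 a (Lg a - u) <= 1.
Proof.
  intros ha. pose proof (Fe_lt_Lg a (1/2) ha ltac:(lra)) as hh.
  pose proof (Fe_lb a 0 (1/2) ha ltac:(rewrite Rabs_R0; lra) ltac:(rewrite Rabs_right; lra) ltac:(lra)) as hh2.
  rewrite Fe_0 in hh2.
  exists (Lg a - Fe a (1/2)). split. lra. intros u hu.
  destruct (sin_a0_spec a (Lg a - u) ha ltac:(lra)) as [hs hF].
  set (s := sin_a0 a (Lg a - u)) in *.
  assert (hs2 : 1/2 < s).
  { apply Rnot_le_lt. intro h. destruct h as [h|h].
    - pose proof (Fe_mono a s (1/2) ha ltac:(apply Rabs_def1; lra) ltac:(rewrite Rabs_right; lra) h). lra.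
    - rewrite h in hF. lra. }
  assert (hfs : 1 <= fe a s) by (apply fe_ge1; auto; apply Rabs_def1; lra).
  assert (hu2 : (1 - s) * fe a s <= u).
  { apply Rnot_lt_le. intro hc.
    set (b := s + (u / fe a s + (1 - s)) / 2).
    assert (hb : s < b < 1).
    { unfold b. assert (u / fe a s < 1 - s). { apply Rmult_lt_reg_r with (fe a s). lra. unfold Rdiv. rewrite Rmult_assoc, Rinv_l by lra. lra. }
      assert (0 < u / fe a s) by (apply Rdiv_lt_0_compat; lra). lra. }
    assert (h1 : (b - s) * fe a s <= Fe a b - Fe a s).
    { rewrite Fe_diff by (auto; apply Rabs_def1; lra).
      replace ((b - s) * fe a s) with (RInt (fun _ => fe a s) s b).
      apply RInt_le. lra. apply ex_RInt_const. apply fe_exRInt; auto; apply Rabs_def1; lra.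
      intros x hx. left. apply fe_mono; auto. rewrite !Rabs_right; lra. rewrite Rabs_right; lra.
      rewrite RInt_const. unfold scal; simpl; unfold mult; simpl. ring. }
    assert (h2 : Fe a b <= Lg a) by (apply (proj1 (Lg_prop a ha)); lra).
    assert (h3 : (b - s) * fe a s = (u + (1 - s) * fe a s) / 2).
    { unfold b. field. lra. }
    lra. }
  assert (hc : 1 - s <= u * sqrt (1 - rpow s (2 * a))).
  { rewrite fe_eq in hu2. rewrite Rabs_right in hu2 by lra.
    pose proof (rp_abs_lt1 a s ha ltac:(rewrite Rabs_right; lra)) as hr. rewrite Rabs_right in hr by lra.
    assert (hq : 0 < sqrt (1 - rpow s (2 * a))) by (apply sqrt_lt_R0; lra).
    apply Rmult_le_reg_r with (/ sqrt (1 - rpow s (2 * a))). apply Rinv_0_lt_compat; lra.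
    rewrite Rmult_assoc, Rinv_r by lra. lra. }
  pose proof (bern a s ha ltac:(lra)) as hb.
  pose proof (rp_abs_lt1 a s ha ltac:(rewrite Rabs_right; lra)) as hr. rewrite Rabs_right in hr by lra.
  assert (hsq : (1 - s)^2 <= u^2 * (1 - rpow s (2*a))).
  { replace (u^2 * (1 - rpow s (2*a))) with ((u * sqrt (1 - rpow s (2 * a)))^2).
    apply pow_incr. lra. rewrite Rpow_mult_distr. rewrite <- Rsqr_pow2 with (x := sqrt _). rewrite Rsqr_sqrt by lra. ring. }
  assert ((1 - s)^2 <= u^2 * (4 * a * (1 - s))).
  { eapply Rle_trans. exact hsq. apply Rmult_le_compat_l. nra. lra. }
  split; [|lra].
  assert (1 - s <= 4 * a * u^2) by nra. lra.
Qed.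

Lemma sin_a_L a : 1 <= a -> sin_a a (Lg a) = 1.
Proof.
  intros ha. pose proof (Lg_pos a ha). replace (Lg a) with (Lg a + 0) by ring.
  rewrite sin_a_peak by (auto; rewrite Rabs_R0; lra). rewrite Rabs_R0, Rminus_0_r. apply sin_a0_L; auto.
Qed.

Lemma sin_a_derive_peak a : 1 <= a -> is_derive (sin_a a) (Lg a) 0.
Proof.
  intros ha. apply is_derive_Reals. pose proof (Lg_pos a ha) as hL.
  destruct (peak_bound a ha) as [d [hd hb]].
  intros eps heps.
  assert (hm : 0 < Rmin (Rmin d (Lg a)) (eps / (4 * a))).
  { repeat apply Rmin_glb_lt; try lra. apply Rdiv_lt_0_compat; lra. }
  exists (mkposreal _ hm). intros h hh0 hh. simpl in hh.
  assert (h1 : Rabs h < d) by (eapply Rlt_le_trans; [exact hh|]; eapply Rle_trans; apply Rmin_l).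
  assert (h2 : Rabs h < Lg a) by (eapply Rlt_le_trans; [exact hh|]; eapply Rle_trans; [apply Rmin_l|apply Rmin_r]).
  assert (h3 : Rabs h < eps / (4 * a)) by (eapply Rlt_le_trans; [exact hh|]; apply Rmin_r).
  rewrite sin_a_peak by auto. rewrite sin_a_L by auto.
  assert (hpos : 0 < Rabs h) by (apply Rabs_pos_lt; auto).
  destruct (hb (Rabs h) ltac:(lra)) as [b1 b2].
  rewrite Rminus_0_r. unfold Rdiv. rewrite Rabs_mult, Rabs_Rinv by auto.
  assert (Rabs (sin_a0 a (Lg a - Rabs h) - 1) <= 4 * a * Rabs h ^ 2).
  { rewrite Rabs_left1 by lra. lra. }
  assert (4 * a * Rabs h < eps).
  { apply Rmult_lt_reg_r with (/ (4 * a)). apply Rinv_0_lt_compat; lra.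
    replace (4 * a * Rabs h * / (4 * a)) with (Rabs h) by (field; lra). exact h3. }
  apply Rle_lt_trans with (4 * a * Rabs h ^ 2 * / Rabs h).
  apply Rmult_le_compat_r. left; apply Rinv_0_lt_compat; lra. auto.
  replace (4 * a * Rabs h ^ 2 * / Rabs h) with (4 * a * Rabs h) by (field; lra). lra.
Qed.

Lemma deriv_shift a x v k : 1 <= a -> is_derive (sin_a a) x v ->
  exists sg, (sg = 1 \/ sg = -1) /\ is_derive (sin_a a) (x + IZR k * pi_a a) (sg * v)
    /\ sin_a a (x + IZR k * pi_a a) = sg * sin_a a x.
Proof.
  intros ha hd. destruct (sin_a_shiftZ a k ha) as [sg [hsg H]].
  exists sg. split; auto. split; [|apply H].
  apply is_derive_ext with (f := fun w => sg * sin_a a (w - IZR k * pi_a a)).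
  { intros w. rewrite <- H. f_equal. ring. }
  apply is_derive_scal.
  set (c := IZR k * pi_a a).
  assert (Hg : is_derive (fun w : R => w - c) (x + c) 1).
  { auto_derive. auto. reflexivity. }
  assert (hd' : is_derive (sin_a a) (x + c - c) v).
  { assert (E : x + c - c = x) by ring. rewrite E. exact hd. }
  pose proof (is_derive_comp (sin_a a) (fun w => w - c) (x + c) v 1 hd' Hg) as Hc.
  simpl in Hc. unfold scal in Hc; simpl in Hc; unfold mult in Hc; simpl in Hc.
  replace v with (1 * v) by ring. exact Hc.
Qed.

Lemma classify a x : 1 <= a ->
  (exists k, x = Lg a + IZR k * pi_a a) \/
  (exists k y, - Lg a < y < Lg a /\ x = y + IZR k * pi_a a).
Proof.
  intros ha. pose proof (Lg_pos a ha) as hL. rewrite pi_a_eq.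
  pose proof (base_Int_part ((x + Lg a) / (2 * Lg a))) as [h1 h2].
  set (k := Int_part _) in *. set (q := (x + Lg a) / (2 * Lg a)) in *.
  assert (Hq : q * (2 * Lg a) = x + Lg a) by (unfold q; field; lra).
  assert (hk1 : IZR k * (2 * Lg a) - Lg a <= x) by nra.
  assert (hk2 : x < IZR k * (2 * Lg a) + Lg a) by nra.
  destruct hk1 as [hk1|hk1].
  - right. exists k, (x - IZR k * (2 * Lg a)). split. lra. ring.
  - left. exists (k - 1)%Z. rewrite minus_IZR. lra.
Qed.

Lemma branch_val a y k : 1 <= a -> - Lg a < y < Lg a ->
  cos_a a (y + IZR k * pi_a a) <> 0 /\
  tan_a a (y + IZR k * pi_a a) = sin_a a y * fe a (sin_a a y).
Proof.
  intros ha hy. destruct (sin_a_small a y ha hy) as [hs _].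
  assert (hpos : 0 < fe a (sin_a a y)) by (apply fe_pos; auto; apply Rabs_def1; lra).
  destruct (deriv_shift a y _ k ha (sin_a_derive a y ha hy)) as [sg [hsg [hd he]]].
  unfold tan_a, cos_a. rewrite (is_derive_unique _ _ _ hd). rewrite he.
  split.
  - apply Rmult_integral_contrapositive. split. destruct hsg; subst; lra.
    apply Rinv_neq_0_compat; lra.
  - field. split. lra. destruct hsg; subst; lra.
Qed.

Lemma peak_val a k : 1 <= a -> cos_a a (Lg a + IZR k * pi_a a) = 0.
Proof.
  intros ha. destruct (deriv_shift a (Lg a) 0 k ha (sin_a_derive_peak a ha)) as [sg [_ [hd _]]].
  unfold cos_a. rewrite (is_derive_unique _ _ _ hd). ring.
Qed.

Definition gs (a s : R) : R := s * fe a s - Fe a s.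

Lemma gs_mono_pos a s1 s2 : 1 <= a -> 0 <= s1 -> s1 < s2 -> s2 < 1 -> gs a s1 < gs a s2.
Proof.
  intros ha h1 h h2. unfold gs.
  set (m := (s1 + s2) / 2).
  assert (A1 : Rabs s1 < 1) by (rewrite Rabs_right; lra).
  assert (A2 : Rabs s2 < 1) by (rewrite Rabs_right; lra).
  assert (Am : Rabs m < 1) by (unfold m; rewrite Rabs_right; lra).
  assert (B1 : Fe a m - Fe a s1 <= (m - s1) * fe a m).
  { rewrite Fe_diff by auto.
    replace ((m - s1) * fe a m) with (RInt (fun _ => fe a m) s1 m).
    apply RInt_le. unfold m; lra. apply fe_exRInt; auto. apply ex_RInt_const.
    intros x hx. left. apply fe_mono; auto. rewrite !Rabs_right; unfold m in *; lra.
    rewrite RInt_const. unfold scal; simpl; unfold mult; simpl. ring. }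
  assert (B2 : Fe a s2 - Fe a m <= (s2 - m) * fe a s2).
  { rewrite Fe_diff by auto.
    replace ((s2 - m) * fe a s2) with (RInt (fun _ => fe a s2) m s2).
    apply RInt_le. unfold m; lra. apply fe_exRInt; auto. apply ex_RInt_const.
    intros x hx. left. apply fe_mono; auto. rewrite !Rabs_right; unfold m in *; lra.
    rewrite RInt_const. unfold scal; simpl; unfold mult; simpl. ring. }
  assert (C1 : fe a m < fe a s2) by (apply fe_mono; auto; rewrite !Rabs_right; unfold m; lra).
  assert (C2 : fe a s1 <= fe a s2).
  { destruct (Req_dec s1 0) as [->|]. 
    - left; apply fe_mono; auto; rewrite Rabs_R0, Rabs_right; lra.
    - left; apply fe_mono; auto; rewrite !Rabs_right; lra. }
  assert (m - s1 > 0) by (unfold m; lra).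
  assert (s2 - m > 0) by (unfold m; lra).
  assert (s1 * fe a s1 <= s1 * fe a s2) by (apply Rmult_le_compat_l; lra).
  assert ((m - s1) * fe a m < (m - s1) * fe a s2) by (apply Rmult_lt_compat_l; lra).
  assert (s2 - s1 = (m - s1) + (s2 - m)) by ring.
  nra.
Qed.

Lemma gs_odd a s : 1 <= a -> Rabs s < 1 -> gs a (- s) = - gs a s.
Proof. intros ha hs. unfold gs. rewrite fe_even, Fe_odd by auto. ring. Qed.

Lemma gs_0 a : gs a 0 = 0.
Proof. unfold gs. rewrite Fe_0. ring. Qed.

Lemma gs_mono a s1 s2 : 1 <= a -> -1 < s1 -> s1 < s2 -> s2 < 1 -> gs a s1 < gs a s2.
Proof.
  intros ha h1 h h2.
  destruct (Rle_dec 0 s1).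
  - apply gs_mono_pos; auto.
  - destruct (Rle_dec s2 0).
    + assert (gs a (- s2) < gs a (- s1)) by (apply gs_mono_pos; auto; lra).
      rewrite !gs_odd in H by (auto; apply Rabs_def1; lra). lra.
    + assert (gs a 0 < gs a s2) by (apply gs_mono_pos; auto; lra).
      assert (gs a 0 < gs a (- s1)) by (apply gs_mono_pos; auto; lra).
      rewrite gs_odd in H0 by (auto; apply Rabs_def1; lra). rewrite gs_0 in *. lra.
Qed.

Definition Tg (a y : R) : R := sin_a a y * fe a (sin_a a y) - y.

Lemma Tg_mono a y1 y2 : 1 <= a -> - Lg a < y1 -> y1 < y2 -> y2 < Lg a -> Tg a y1 < Tg a y2.
Proof.
  intros ha h1 h h2.
  destruct (sin_a_small a y1 ha ltac:(lra)) as [a1 b1].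
  destruct (sin_a_small a y2 ha ltac:(lra)) as [a2 b2].
  assert (Tg a y1 = gs a (sin_a a y1)) by (unfold Tg, gs; rewrite b1; ring).
  assert (Tg a y2 = gs a (sin_a a y2)) by (unfold Tg, gs; rewrite b2; ring).
  rewrite H, H0. apply gs_mono; auto. lra. apply sin_a_mono; auto. lra.
Qed.

Lemma key a y0 y1 d : 1 <= a -> - Lg a < y0 < Lg a -> - Lg a < y1 < Lg a ->
  Tg a y1 - Tg a y0 = IZR d * pi_a a ->
  Rabs (y1 - y0 + IZR d * pi_a a) < pi_a a -> d = 0%Z /\ y1 = y0.
Proof.
  intros ha h0 h1 hT hb. pose proof (Lg_pos a ha) as hL. rewrite pi_a_eq in *.
  apply Rabs_def2 in hb as [hb1 hb2].
  assert (hd1 : IZR d < 2) by nra.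
  assert (hd2 : -2 < IZR d) by nra.
  apply lt_IZR in hd1. apply lt_IZR in hd2.
  assert (Hd3 : (d = 0 \/ d = 1 \/ d = -1)%Z) by lia. destruct Hd3 as [ -> | [ -> | -> ] ].
  - split; auto. simpl in hT.
    destruct (Rtotal_order y0 y1) as [h|[h|h]]; auto.
    + pose proof (Tg_mono a y0 y1 ha ltac:(lra) h ltac:(lra)). lra.
    + pose proof (Tg_mono a y1 y0 ha ltac:(lra) h ltac:(lra)). lra.
  - exfalso. simpl in *. destruct (Rle_dec y1 y0) as [[h|h]|h].
    + pose proof (Tg_mono a y1 y0 ha ltac:(lra) h ltac:(lra)). lra.
    + subst. lra.
    + lra.
  - exfalso. simpl in *. destruct (Rle_dec y0 y1) as [[h|h]|h].
    + pose proof (Tg_mono a y0 y1 ha ltac:(lra) h ltac:(lra)). lra.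
    + subst. lra.
    + lra.
Qed.

Theorem mainTheorem9 (a phi : R) (ha : 1 <= a)
  (hphi : 0 <= phi < 2 * pi_a a)
  (hphi1 : phi <> pi_a a / 2) (hphi2 : phi <> 3 * pi_a a / 2) :
  cos_a a phi <> 0 /\
  (forall zeta : R, Rabs zeta < pi_a a ->
     cos_a a (zeta + phi) <> 0 ->
     tan_a a (zeta + phi) - tan_a a phi = zeta ->
     zeta = 0).
Proof.
  pose proof (Lg_pos a ha) as hL.
  destruct (classify a phi ha) as [[k hk]|[k0 [y0 [hy0 hk0]]]].
  - exfalso. rewrite pi_a_eq in *. 
    assert (IZR k < 2) by nra. assert (-1 < IZR k) by nra.
    apply lt_IZR in H. apply lt_IZR in H0.
    assert (Hk3 : (k = 0 \/ k = 1)%Z) by lia. destruct Hk3 as [ -> | -> ]; simpl in hk.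
    + apply hphi1. lra.
    + apply hphi2. lra.
  - destruct (branch_val a y0 k0 ha hy0) as [hc0 ht0]. rewrite <- hk0 in hc0, ht0.
    split; auto.
    intros zeta hz hc1 ht.
    destruct (classify a (zeta + phi) ha) as [[k hk]|[k1 [y1 [hy1 hk1]]]].
    + rewrite hk in hc1. rewrite peak_val in hc1 by auto. lra.
    + destruct (branch_val a y1 k1 ha hy1) as [_ ht1]. rewrite <- hk1 in ht1.
      rewrite ht0, ht1 in ht.
      assert (hT : Tg a y1 - Tg a y0 = IZR (k1 - k0) * pi_a a).
      { unfold Tg. rewrite minus_IZR. lra. }
      assert (hz' : zeta = y1 - y0 + IZR (k1 - k0) * pi_a a) by (rewrite minus_IZR; lra).
      destruct (key a y0 y1 (k1 - k0) ha hy0 hy1 hT ltac:(rewrite <- hz'; auto)) as [hd hy].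
      rewrite hz', hd, hy. simpl. ring.
Qed.
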